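(* Let $R\in\mathcal{RS}_n$ and let $S=\mathrm{Ctr}(R)$ be the corresponding sticky tree. Suppose that the leaf $f$ is the certificate of an internal node $u$ of positive depth in $R$, and let $v$ be the parent of $f$. Let $u',v'$ be the nodes of $S$ corresponding to $u,v$. Then $v'$ is the certificate of $u'$ in $S$.
   Context: Plane trees: a plane tree is a rooted tree in which the children of every node are linearly ordered (left to right); the root has depth $0$, a child of a node of depth $d$ has depth $d+1$; leaves are nodes without children, internal nodes have at least one child. The prefix order is: the root, followed by the prefix order of the subtree of its leftmost child, then of its second child, and so on. $R_u$ (or $S_u$) denotes the subtree rooted at $u$. Sticky trees: a sticky tree is a plane tree $S$ with node set $V$ and a labeling $\ell:V\to\mathbb{N}$ such that: (1) every node $u$ of depth $d$ has $0\le\ell(u)\le d$; (2) every node $u$ of depth $d>0$ has some $v\in S_u$ (possibly $v=u$) with $\ell(v)<d$; (3) for every node $u$ of depth $d$, if some $v\in S_u$ has $\ell(v)=d$, then every node of $S_u$ (including $u$) preceding $v$ in prefix order has label at least $d$. The certificate of a non-root node $u$ of depth $d$ in a sticky tree is the first node, in prefix order, of $S_u$ whose label is $<d$. Decorated trees: a decorated tree is a plane tree $R$ with an integer labeling $\ell$ defined only on its leaves such that: (1') for every leaf $f$ whose parent has depth $d$, $-1\le\ell(f)\le d-1$; (2') every internal node $u$ of depth $d>0$ has a descendant leaf $f$ with $\ell(f)<d-1$; (3') for every node $t$ of depth $d$ and every child $u$ of $t$, if some leaf $f$ of $R_u$ has $\ell(f)=d$, then every leaf of $R_u$ preceding $f$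 in prefix order has label at least $d$. The certificate of an internal node $u$ of depth $d>0$ in a decorated tree is the first leaf, in prefix order, of $R_u$ with label $<d-1$. $\mathcal{RS}_n$ is the set of decorated trees with $n+1$ internal nodes and $n+1$ leaves in which every internal node has a leaf as its first child. The map $\mathrm{Ctr}$: for $R\in\mathcal{RS}_n$, $\mathrm{Ctr}(R)$ is obtained by deleting all leaves of $R$, each remaining (formerly internal) node $w$ receiving label $\ell(f)+1$ where $f$ is the first child of $w$ in $R$; the nodes of $\mathrm{Ctr}(R)$ thus correspond to the internal nodes of $R$. $\mathrm{Ctr}(R)$ is a sticky tree. *)

(* Defs.v *)
From mathcomp Require Import all_boot all_order all_algebra.
Set Implicit Arguments. Unset Strict Implicit. Unset Printing Implicit Defensive.
Import GRing.Theory Num.Theory.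

Inductive tree := Node of seq tree.

(* Nodes are addressed by paths (sequences of child indices, 0-based, from
   the root); the root is [::], depth of node p is size p. *)
Fixpoint subt (t : tree) (p : seq nat) : option tree :=
  match p with
  | [::] => Some t
  | i :: p' => let: Node cs := t in
               if i < size cs then subt (nth t cs i) p' else None
  end.

Definition is_node (t : tree) (p : seq nat) : bool :=
  if subt t p is Some _ then true else false.
Definition is_leaf (t : tree) (p : seq nat) : bool :=
  if subt t p is Some (Node [::]) then true else false.
Definition is_internal (t : tree) (p : seq nat) : bool :=
  if subt t p is Some (Node (_ :: _)) then true else false.

Definition parent (p : seq nat) : seq nat := take (size p).-1 p.

Fixpoint preorder (t : tree) : seq (seq nat) :=
  let: Node cs := t in
  [::] :: (fix aux (i : nat) (cs : seq tree) : seq (seq nat) :=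
             match cs with
             | [::] => [::]
             | c :: cs' => map (cons i) (preorder c) ++ aux i.+1 cs'
             end) 0 cs.

Definition sub_nodes (t : tree) (u : seq nat) : seq (seq nat) :=
  if subt t u is Some s then map (cat u) (preorder s) else [::].

Definition precedes (s : seq (seq nat)) (g f : seq nat) : bool :=
  g \in take (index f s) s.

(* Decorated trees: shape t with labels l (only the values on leaves matter). *)
Definition decorated (t : tree) (l : seq nat -> int) : Prop :=
  (forall f, is_leaf t f -> f != [::] ->
     (-1 <= l f)%R && (l f <= Posz (size f) - 2)%R) /\
  (forall u, is_internal t u -> 0 < size u ->
     exists2 f, f \in sub_nodes t u & is_leaf t f && (l f < Posz (size u) - 1)%R) /\
  (* (3') : t0 of depth d, u a child of t0 *)
  (forall t0 i, is_node t (rcons t0 i) ->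
     forall f, f \in sub_nodes t (rcons t0 i) -> is_leaf t f ->
       l f = Posz (size t0) ->
       forall g, is_leaf t g -> precedes (sub_nodes t (rcons t0 i)) g f ->
         (Posz (size t0) <= l g)%R).

Definition in_RS (n : nat) (t : tree) (l : seq nat -> int) : Prop :=
  [/\ decorated t l,
      count (is_internal t) (preorder t) = n.+1,
      count (is_leaf t) (preorder t) = n.+1 &
      forall u, is_internal t u -> is_leaf t (rcons u 0)].

Definition dec_cert (t : tree) (l : seq nat -> int) (u : seq nat) : option (seq nat) :=
  ohead [seq f <- sub_nodes t u | is_leaf t f && (l f < Posz (size u) - 1)%R].

Definition stk_cert (t : tree) (l : seq nat -> int) (u : seq nat) : option (seq nat) :=
  ohead [seq v <- sub_nodes t u | (l v < Posz (size u))%R].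

Fixpoint ctr_shape (t : tree) : tree :=
  let: Node cs := t in
  Node ((fix aux (cs : seq tree) : seq tree :=
           match cs with
           | [::] => [::]
           | Node [::] :: cs' => aux cs'
           | c :: cs' => ctr_shape c :: aux cs'
           end) cs).

Definition internalb (t : tree) : bool := if t is Node (_ :: _) then true else false.

Fixpoint ctr_path (t : tree) (p : seq nat) : seq nat :=
  match p with
  | [::] => [::]
  | i :: p' => let: Node cs := t in
               count internalb (take i cs) :: ctr_path (nth t cs i) p'
  end.

(* Labels of Ctr(t): the node corresponding to internal node w receives
   l(f) + 1, f the first child of w. *)
Definition ctr_label (t : tree) (l : seq nat -> int) (q : seq nat) : int :=
  match [seq p <- preorder t | is_internal t p & ctr_path t p == q] with
  | p :: _ => (l (rcons p 0) + 1)%R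
  | [::] => 0%R
  end.

(* Main.v *)
Require Import Defs.
From mathcomp Require Import all_boot all_order all_algebra.
From mathcomp Require Import zify.
Set Implicit Arguments. Unset Strict Implicit. Unset Printing Implicit Defensive.

Fixpoint lexle (p q : seq nat) : bool :=
  match p, q with
  | [::], _ => true
  | _ :: _, [::] => false
  | a :: p', b :: q' => (a < b) || ((a == b) && lexle p' q')
  end.

Lemma lexle_refl p : lexle p p.
Proof. by elim: p => //= a p ->; rewrite eqxx orbT. Qed.

Lemma lexle_trans : transitive lexle.
Proof.
move=> q p r; elim: p q r => [//|a p IH] [|b q] [|c r] //=.
case/orP=> [ab|/andP[/eqP<- pq]]; case/orP=> [bc|/andP[/eqP<- qr]].
- by rewrite (ltn_trans ab bc).
- by rewrite ab.
- by rewrite bc.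
- by rewrite eqxx (IH q r pq qr) orbT.
Qed.

Lemma lexle_anti p q : lexle p q -> lexle q p -> p = q.
Proof.
elim: p q => [|a p IH] [|b q] //=.
case/orP=> [ab|/andP[/eqP<- pq]]; case/orP=> [ba|/andP[/eqP ba qp]].
- by move: (ltn_trans ab ba); rewrite ltnn.
- by move: ab; rewrite ba ltnn.
- by move: ba; rewrite ltnn.
- by rewrite (IH q pq qp).
Qed.

Lemma lexle_cat u a b : lexle (u ++ a) (u ++ b) = lexle a b.
Proof. by elim: u => //= x u ->; rewrite ltnn eqxx. Qed.

Lemma lexle_prefix u w : prefix u w -> lexle u w.
Proof. by case/prefixP=> x ->; rewrite -{1}(cats0 u) lexle_cat. Qed.

Lemma lexle_rcons0 v w : lexle (rcons v 0) (rcons w 0) -> lexle v w.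
Proof.
elim: v w => [//|a v IH] [|b w] /=.
  by case: v {IH} => [|c v] /=; rewrite ?ltn0 ?andbF.
by case/orP=> [->//|/andP[-> /IH ->]]; rewrite orbT.
Qed.

Definition lexlt p q := lexle p q && (p != q).

Lemma lexlt_trans : transitive lexlt.
Proof.
move=> q p r /andP[pq npq] /andP[qr nqr]; rewrite /lexlt (lexle_trans pq qr) /=.
apply/eqP=> E; subst r; by rewrite (lexle_anti pq qr) eqxx in npq.
Qed.

Lemma lexlt_irr : irreflexive lexlt.
Proof. by move=> p; rewrite /lexlt eqxx andbF. Qed.

Lemma lexlt_cons i a b : lexlt (i :: a) (i :: b) = lexlt a b.
Proof. by rewrite /lexlt /= ltnn eqxx eqseq_cons eqxx. Qed.

Fixpoint tree_ind' (P : tree -> Prop)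
  (H : forall cs, (forall i, i < size cs -> P (nth (Node [::]) cs i)) -> P (Node cs))
  (t : tree) : P t :=
  let: Node cs := t in
  H cs ((fix aux (cs : seq tree) : forall i, i < size cs -> P (nth (Node [::]) cs i) :=
     match cs return forall i, i < size cs -> P (nth (Node [::]) cs i) with
     | [::] => fun i Hi => False_ind _ (Bool.diff_false_true (etrans (esym (ltn0 i)) Hi))
     | c :: cs' => fun i => match i return i < size (c :: cs') -> P (nth (Node [::]) (c :: cs') i) with
                   | 0 => fun _ => tree_ind' H c
                   | i'.+1 => fun Hi => aux cs' i' Hi
                   end
     end) cs).

Fixpoint paux (i : nat) (cs : seq tree) : seq (seq nat) :=
  match cs with
  | [::] => [::]
  | c :: cs' => map (cons i) (preorder c) ++ paux i.+1 cs'
  end.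

Lemma preorder_node cs : preorder (Node cs) = [::] :: paux 0 cs.
Proof. by []. Qed.

Lemma subt_cons cs i p : subt (Node cs) (i :: p) =
  if i < size cs then subt (nth (Node [::]) cs i) p else None.
Proof. by rewrite /=; case: ifP => // H; rewrite (set_nth_default (Node [::])). Qed.

Lemma subt_cat t u x : subt t (u ++ x) =
  if subt t u is Some s then subt s x else None.
Proof.
elim: u t => [//|i u IH] [cs] /=; case: ifP => // _; exact: IH.
Qed.

Lemma paux_head i cs x : x \in paux i cs -> exists a p, x = a :: p /\ i <= a.
Proof.
elim: cs i => [//|c cs IH] i /=; rewrite mem_cat => /orP[/mapP[p _ ->]|/IH[a [p [-> H]]]].
- by exists i, p.
- by exists a, p; split => //; apply: ltnW.
Qed.

Lemma mem_map_cons i a p (s : seq (seq nat)) : (a :: p \in map (cons i) s) = (a == i) && (p \in s).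
Proof.
apply/mapP/andP => [[q qin [-> ->]]|[/eqP-> H]]; first by rewrite eqxx.
by exists p.
Qed.

Lemma paux_mem i cs a p : (a :: p \in paux i cs) =
  (i <= a < i + size cs) && (p \in preorder (nth (Node [::]) cs (a - i))).
Proof.
elim: cs i => [|c cs IH] i /=; first by rewrite addn0; case: (leqP i a) => //= H; rewrite ltnNge H.
rewrite mem_cat IH mem_map_cons; case: (ltngtP a i) => H /=.
- by [].
- have -> : a - i = (a - i.+1).+1 by lia.
  by rewrite addSnnS.
- subst a; rewrite subnn /= addnS ltnS leq_addr /= orbF //.
Qed.

Lemma mem_preorder t p : (p \in preorder t) = is_node t p.
Proof.
elim: p t => [|a p IH] [cs] //; rewrite preorder_node in_cons /= paux_mem subn0 IH.
rewrite /is_node subt_cons; case: ifP => //.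
Qed.

Lemma all_paux i cs : all (lexlt [::]) (paux i cs).
Proof. apply/allP=> x /paux_head[a [p [-> _]]]; by []. Qed.

Lemma sorted_preorder t : sorted lexlt (preorder t).
Proof.
elim/tree_ind': t => cs IH.
rewrite preorder_node (sorted_pairwise lexlt_trans) /= all_paux /=.
suff: forall i, pairwise lexlt (paux i cs) by [].
elim: cs IH => [//|c cs IHc] IH i /=.
rewrite pairwise_cat pairwise_map IHc; last by move=> j Hj; apply: (IH j.+1).
have := IH 0 isT; rewrite /= (sorted_pairwise lexlt_trans) => Hc.
apply/andP; split; last first.
  rewrite andbT; move: Hc; elim: (preorder c) => //= x s IHs /andP[hx hs].
  rewrite IHs // andbT; apply/allP => y ys /=; rewrite lexlt_cons; exact: (allP hx).
apply/allrelP=> x y /mapP[p _ ->] /paux_head[a [q [-> H]]].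
by rewrite /lexlt /= H /= eqseq_cons (ltn_eqF H).
Qed.

Lemma sorted_preorder_le t : sorted lexle (preorder t).
Proof. by apply: sub_sorted (sorted_preorder t) => x y /andP[]. Qed.

Lemma uniq_preorder t : uniq (preorder t).
Proof. exact: (sorted_uniq lexlt_trans lexlt_irr (sorted_preorder t)). Qed.

Lemma leaf_node t p : is_leaf t p -> is_node t p.
Proof. by rewrite /is_leaf /is_node; case: (subt t p). Qed.

Lemma internal_node t p : is_internal t p -> is_node t p.
Proof. by rewrite /is_internal /is_node; case: (subt t p). Qed.

Lemma leaf_internal t p : is_leaf t p -> is_internal t p -> False.
Proof. by rewrite /is_leaf /is_internal; case: (subt t p) => // [[[|]]]. Qed.

Lemma mem_sub_nodes t u p : (p \in sub_nodes t u) = is_node t p && prefix u p.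
Proof.
rewrite /sub_nodes; case E: (subt t u) => [s|].
- apply/mapP/andP => [[x xin ->]|[H /prefixP[x Ex]]].
  + by split; rewrite ?prefix_prefix // /is_node subt_cat E -/(is_node s x) -mem_preorder.
  + by exists x => //; move: H; rewrite Ex /is_node subt_cat E -/(is_node s x) -mem_preorder.
- rewrite in_nil; apply/esym/negbTE/andP => [[H /prefixP[x Ex]]].
  by move: H; rewrite Ex /is_node subt_cat E.
Qed.

Lemma sorted_sub_nodes t u : sorted lexle (sub_nodes t u).
Proof.
rewrite /sub_nodes; case: (subt t u) => [s|//].
rewrite sorted_map; apply: sub_sorted (sorted_preorder_le s) => x y /=.
by rewrite lexle_cat.
Qed.

Lemma head_min (P : pred (seq nat)) s a : sorted lexle s ->
  ohead (filter P s) = Some a ->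
  [/\ a \in s, P a & forall b, b \in s -> P b -> lexle a b].
Proof.
move=> ss; case E: (filter P s) => [//|h r] /= [<-].
have hin : h \in filter P s by rewrite E mem_head.
move: (hin); rewrite mem_filter => /andP[Ph hs]; split => // b bs Pb.
have : b \in filter P s by rewrite mem_filter Pb bs.
rewrite E in_cons => /orP[/eqP->|br]; first exact: lexle_refl.
have : sorted lexle (filter P s) by exact: (sorted_filter lexle_trans P ss).
rewrite E /= => /(order_path_min lexle_trans)/allP; exact.
Qed.

Lemma head_char (P : pred (seq nat)) s a : sorted lexle s ->
  a \in s -> P a -> (forall b, b \in s -> P b -> lexle a b) ->
  ohead (filter P s) = Some a.
Proof.
move=> ss ains Pa amin.
have : a \in filter P s by rewrite mem_filter Pa ains.
case E: (filter P s) => [//|h r] ain /=; congr Some.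
have hin : h \in filter P s by rewrite E mem_head.
move: (hin); rewrite mem_filter => /andP[Ph hs].
apply: lexle_anti; last exact: amin.
move: ain; rewrite in_cons => /orP[/eqP->|ar]; first exact: lexle_refl.
have : sorted lexle (filter P s) by exact: (sorted_filter lexle_trans P ss).
rewrite E /= => /(order_path_min lexle_trans)/allP; exact.
Qed.

Lemma leaf_first_child n t l f : in_RS n t l -> is_leaf t f ->
  exists2 v, is_internal t v & f = rcons v 0.
Proof.
case=> _ cI cL fc lf.
set I := filter (is_internal t) (preorder t).
set L := filter (is_leaf t) (preorder t).
have fL : f \in L by rewrite mem_filter lf mem_preorder leaf_node.
case H: (f \in map (rcons^~ 0) I).
  by case/mapP: H => v; rewrite mem_filter => /andP[iv _] ->; exists v.
exfalso.
have uL : uniq L by rewrite filter_uniq // uniq_preorder.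
have u1 : uniq (map (rcons^~ 0) I).
  by rewrite map_inj_uniq ?filter_uniq ?uniq_preorder //; exact: rcons_injl.
have sub : {subset map (rcons^~ 0) I <= rem f L}.
  move=> x xin; rewrite (mem_rem_uniq _ uL) inE.
  have xf : x != f by apply/eqP => E; rewrite -E xin in H.
  case/mapP: xin => v; rewrite mem_filter => /andP[iv _] E.
  by rewrite xf /= E mem_filter fc // mem_preorder leaf_node // fc.
have := uniq_leq_size u1 sub.
rewrite size_map size_rem // !size_filter cI cL /=; lia.
Qed.

Lemma ctr_shape_node cs : ctr_shape (Node cs) = Node (map ctr_shape (filter internalb cs)).
Proof.
elim: cs => [//|[[|a b]] cs IH] /=; first by [].
by case: IH => ->.
Qed.

Lemma cp_cons cs i p : i < size cs ->
  ctr_path (Node cs) (i :: p) = count internalb (take i cs) :: ctr_path (nth (Node [::]) cs i) p.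
Proof. by move=> H /=; rewrite (set_nth_default (Node [::])). Qed.

Lemma size_cp t p : size (ctr_path t p) = size p.
Proof. by elim: p t => [//|i p IH] [cs] /=; rewrite IH. Qed.

Lemma cp_cat t u x s : subt t u = Some s -> ctr_path t (u ++ x) = ctr_path t u ++ ctr_path s x.
Proof.
elim: u t => [|i u IH] [cs] /=; first by case=> ->.
by case: ifP => // _ /IH ->.
Qed.

Lemma internal_root t p : is_internal t p -> internalb t.
Proof.
case: p => [|i p]; first by case: t => [[|]].
by case: t => [[|c cs]] //; rewrite /is_internal /=; case: ifP.
Qed.

Lemma internal_cons cs i p : is_internal (Node cs) (i :: p) ->
  i < size cs /\ is_internal (nth (Node [::]) cs i) p.
Proof. by rewrite /is_internal subt_cons; case: ifP. Qed.

Lemma node_cons cs i p : is_node (Node cs) (i :: p) ->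
  i < size cs /\ is_node (nth (Node [::]) cs i) p.
Proof. by rewrite /is_node subt_cons; case: ifP. Qed.

Lemma count_take_lt cs i j : i < j -> j <= size cs -> internalb (nth (Node [::]) cs i) ->
  count internalb (take i cs) < count internalb (take j cs).
Proof.
move=> ij js Hi.
have -> : take j cs = take i.+1 cs ++ drop i.+1 (take j cs).
  by rewrite -{1}(cat_take_drop i.+1 (take j cs)) take_takel.
rewrite count_cat (take_nth (Node [::])); last by apply: leq_trans js.
by rewrite -cats1 count_cat /= Hi addn0 addn1 ltnS leq_addr.
Qed.

Lemma count_take_inj cs i j : i < size cs -> j < size cs ->
  internalb (nth (Node [::]) cs i) -> internalb (nth (Node [::]) cs j) ->
  count internalb (take i cs) = count internalb (take j cs) -> i = j.
Proof.
move=> iS jS Hi Hj E; case: (ltngtP i j) => // H.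
- by move: (count_take_lt H (ltnW jS) Hi); rewrite E ltnn.
- by move: (count_take_lt H (ltnW iS) Hj); rewrite E ltnn.
Qed.

Lemma nth_filter_count cs i : i < size cs -> internalb (nth (Node [::]) cs i) ->
  count internalb (take i cs) < count internalb cs /\
  nth (Node [::]) (filter internalb cs) (count internalb (take i cs)) = nth (Node [::]) cs i.
Proof.
elim: cs i => [//|c cs IH] [|i] /=.
- by move=> _ ->.
- rewrite ltnS => /IH H /H [H1 H2]; rewrite ltn_add2l; split => //.
  by case: (internalb c).
Qed.

Lemma filter_nth_index cs j : j < count internalb cs ->
  exists i, [/\ i < size cs, internalb (nth (Node [::]) cs i),
     count internalb (take i cs) = j &
     nth (Node [::]) (filter internalb cs) j = nth (Node [::]) cs i].
Proof.
elim: cs j => [//|c cs IH] j /=; case Ec: (internalb c) => /=.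
- case: j => [|j] Hj; first by exists 0; rewrite Ec.
  move: Hj; rewrite add1n ltnS => /IH [i [H1 H2 H3 H4]]; exists i.+1; split => //=.
  by rewrite Ec H3.
- rewrite add0n => /IH [i [H1 H2 H3 H4]]; exists i.+1; split => //=.
  by rewrite Ec H3.
Qed.

Lemma node_cp t w : is_internal t w -> is_node (ctr_shape t) (ctr_path t w).
Proof.
elim: w t => [|i w IH] [cs]; first by [].
move=> /[dup] /internal_cons [iS iw] Hw.
rewrite cp_cons // ctr_shape_node /is_node subt_cons size_map size_filter.
have [H1 H2] := nth_filter_count iS (internal_root iw).
rewrite H1 (nth_map (Node [::])) ?size_filter // H2; exact: IH.
Qed.

Lemma cp_surj t q : internalb t -> is_node (ctr_shape t) q ->
  exists2 w, is_internal t w & ctr_path t w = q.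
Proof.
elim: q t => [|j q IH] [cs] it; first by exists [::].
rewrite ctr_shape_node => /node_cons []; rewrite size_map size_filter => js.
case/filter_nth_index: (js) => i [iS ii E1 E2].
rewrite (nth_map (Node [::])) ?size_filter // E2 => /(IH _ ii) [w iw E].
exists (i :: w); last by rewrite cp_cons // E1 E.
by rewrite /is_internal subt_cons iS.
Qed.

Lemma cp_prefix t u w : is_internal t u -> is_internal t w ->
  prefix (ctr_path t u) (ctr_path t w) -> prefix u w.
Proof.
elim: u t w => [|a u IH] [cs] [|b w] //= iu iw.
move=> /andP[/eqP E P].
have [aS au] := internal_cons iu; have [bS bw] := internal_cons iw.
have ab := count_take_inj aS bS (internal_root au) (internal_root bw) E; subst b.
rewrite eqxx /=; apply: (IH _ _ au bw).
by move: P; rewrite !(set_nth_default (Node [::])).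
Qed.

Lemma prefix_eq (u w : seq nat) : prefix u w -> size w <= size u -> u = w.
Proof.
case/prefixP=> x ->; rewrite size_cat; case: x => [|y x]; first by rewrite cats0.
by rewrite /= addnS ltnNge leq_addr.
Qed.

Lemma cp_inj t u w : is_internal t u -> is_internal t w ->
  ctr_path t u = ctr_path t w -> u = w.
Proof.
move=> iu iw E; apply: prefix_eq; first by apply: (cp_prefix iu iw); rewrite E prefix_refl.
by rewrite -(size_cp t u) E size_cp.
Qed.

Lemma cp_mono t v w : is_internal t v -> is_node t w -> lexle v w ->
  lexle (ctr_path t v) (ctr_path t w).
Proof.
elim: v t w => [|a v IH] [cs] [|b w] //= iv iw.
have [aS av] := internal_cons iv; have [bS bw] := node_cons iw.
case/orP=> [ab|/andP[/eqP E le]].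
- by rewrite (count_take_lt ab (ltnW bS) (internal_root av)).
- subst b; rewrite ltnn eqxx /=.
  move: (IH _ _ av bw le); rewrite !(set_nth_default (Node [::])) //.
Qed.

Lemma ctr_label_cp t l w : is_internal t w ->
  ctr_label t l (ctr_path t w) = (l (rcons w 0) + 1)%R.
Proof.
move=> iw; rewrite /ctr_label.
have wF : w \in [seq p <- preorder t | is_internal t p & ctr_path t p == ctr_path t w].
  by rewrite mem_filter iw eqxx mem_preorder internal_node.
have HF : forall p, p \in [seq p <- preorder t | is_internal t p & ctr_path t p == ctr_path t w] -> p = w.
  by move=> p; rewrite mem_filter => /andP[/andP[ip /eqP E] _]; exact: cp_inj ip iw E.
case: [seq p <- _ | _] wF HF => [//|p r] _ HF.
by rewrite (HF p (mem_head _ _)).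
Qed.

Theorem mainTheorem8 (n : nat) (R : tree) (l : seq nat -> int) (u f : seq nat) :
  in_RS n R l ->
  is_internal R u -> 0 < size u ->
  dec_cert R l u = Some f ->
  stk_cert (ctr_shape R) (ctr_label R l) (ctr_path R u)
    = Some (ctr_path R (parent f)).
Proof.
move=> RS iu su dc.
have fc : forall w, is_internal R w -> is_leaf R (rcons w 0) by case: RS.
rewrite /dec_cert in dc.
have [fin /andP[lf lfd] fmin] := head_min (sorted_sub_nodes R u) dc.
have [v iv Ef] := leaf_first_child RS lf.
have -> : parent f = v by rewrite Ef /parent size_rcons /= -cats1 take_size_cat.
have uv : prefix u v.
  move: fin; rewrite mem_sub_nodes => /andP[_ /prefixP[x Ex]].
  case/lastP: x Ex => [|x b] Ex.
    by exfalso; move: Ex; rewrite cats0 => Ex; apply: (leaf_internal lf); rewrite Ex.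
  move: Ex; rewrite Ef -rcons_cat => /rcons_inj [-> _]; exact: prefix_prefix.
have [s Es] : exists s, subt R u = Some s.
  by move: iu; rewrite /is_internal; case: (subt R u) => // s _; exists s.
rewrite /stk_cert; apply: head_char; first exact: sorted_sub_nodes.
- rewrite mem_sub_nodes node_cp //=; case/prefixP: uv => x ->.
  by rewrite (cp_cat _ Es) prefix_prefix.
- rewrite /= ctr_label_cp // -Ef size_cp; move: lfd; lia.
- move=> q; rewrite mem_sub_nodes => /andP[qn pq] /= lq.
  have [w iw Ew] := cp_surj (internal_root iu) qn; subst q.
  have uw := cp_prefix iu iw pq.
  rewrite ctr_label_cp // size_cp in lq.
  apply: (cp_mono iv (internal_node iw)).
  apply: lexle_rcons0; rewrite -Ef; apply: fmin.
  + rewrite mem_sub_nodes leaf_node ?fc //=; case/prefixP: uw => x ->.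
    by rewrite rcons_cat prefix_prefix.
  + by rewrite /= fc //= Num.Theory.ltrBrDr.
Qed.
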